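(* For an integer $k\ge 1$ let $n_k=2^{2^k-1}$. Then $n_k$ is super-imperfect, i.e. $2\beta(\beta(n_k))=n_k$, if and only if $k\in\{1,2,3,4,5\}$.
   Context: $\beta$ is the multiplicative arithmetic function with $\beta(1)=1$ and $\beta(p^a)=p^a-p^{a-1}+p^{a-2}-\cdots+(-1)^a=\frac{p^{a+1}+(-1)^a}{p+1}$ for every prime power $p^a$ ($a\ge1$). A positive integer $n$ is called super-imperfect if $2\beta(\beta(n))=n$. *)

(* Defs.v *)
From mathcomp Require Import all_boot.
Set Implicit Arguments. Unset Strict Implicit. Unset Printing Implicit Defensive.

(* beta(p^a) = (p^(a+1) + (-1)^a) / (p+1)  (exact division, computed in nat). *)
Definition beta_pp (p a : nat) : nat :=
  (if odd a then p ^ a.+1 - 1 else p ^ a.+1 + 1) %/ p.+1.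

Definition beta (n : nat) : nat :=
  \prod_(p <- primes n) beta_pp p (logn p n).

Definition super_imperfect (n : nat) : Prop := 0 < n /\ 2 * beta (beta n) = n.

(* Main.v *)
Require Import Defs.
From mathcomp Require Import all_boot zify.

Lemma prod_primes_gt0 (s : seq nat) : all prime s -> 0 < \prod_(q <- s) q.
Proof.
elim: s => [|q s IH] /=; first by rewrite big_nil.
case/andP=> pq ps; rewrite big_cons muln_gt0 prime_gt0 //; exact: IH.
Qed.

Lemma logn_prod (s : seq nat) p : all prime s ->
  logn p (\prod_(q <- s) q) = count_mem p s.
Proof.
elim: s => [|q s IH] /=; first by rewrite big_nil logn1.
case/andP=> pq ps; rewrite big_cons (lognM _ (prime_gt0 pq) (@prod_primes_gt0 s ps)).
by rewrite logn_prime // IH // eq_sym.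
Qed.

Lemma beta_pp1 p : 0 < p -> beta_pp p 1 = p.-1.
Proof.
move=> p0; rewrite /beta_pp /=.
have -> : p ^ 2 - 1 = p.+1 * p.-1 by case: p p0 => // p _; rewrite /=; lia.
by rewrite mulKn.
Qed.

Lemma beta_sqfree (s : seq nat) : sorted ltn s -> all prime s ->
  beta (\prod_(p <- s) p) = \prod_(p <- s) p.-1.
Proof.
move=> ss ps; rewrite /beta.
have us : uniq s by apply: (sorted_uniq ltn_trans ltnn).
have -> : primes (\prod_(p <- s) p) = s.
  apply: (irr_sorted_eq ltn_trans ltnn) => //; first exact: sorted_primes.
  move=> p; rewrite -logn_gt0 logn_prod // count_uniq_mem //.
  by case: (p \in s).
rewrite big_seq [in RHS]big_seq; apply: eq_bigr => p ps'.
rewrite logn_prod // count_uniq_mem // ps' beta_pp1 //.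
exact: prime_gt0 (allP ps _ ps').
Qed.

Lemma beta_pow2 a : odd a -> beta (2 ^ a) = (2 ^ a.+1 - 1) %/ 3.
Proof.
move=> oa; have a0 : 0 < a by case: a oa.
by rewrite /beta primesX // primes_prime // big_seq1 pfactorK // /beta_pp oa.
Qed.

Lemma modXone x d j : 1 < d -> x %% d = 1 -> x ^ j %% d = 1.
Proof. by move=> d1 h; rewrite -modnXm h exp1n modn_small. Qed.

Lemma pow2k k : 1 <= k -> 2 ^ k = (2 ^ k - 1).+1 /\ odd (2 ^ k - 1).
Proof.
case: k => // k _; rewrite expnS.
have : 0 < 2 ^ k by rewrite expn_gt0.
move: (2 ^ k) => X X0; split; first lia.
have -> : 2 * X - 1 = (X - 1).*2 + 1 by rewrite -muln2; lia.
by rewrite oddD odd_double.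
Qed.

Lemma key e : 1 <= e -> exists d, [/\ d %| beta_pp 641 e, odd d & 1 < d].
Proof.
move=> e1; rewrite /beta_pp.
have h2 : (641 * 641) %% 642 = 1 by lia.
case oe: (odd e).
- exists 5; split; [|by []|by []].
  have hX : 641 ^ e.+1 %% 642 = 1.
    have -> : e.+1 = 2 * (e.+1)./2.
      by move: (odd_double_half e.+1); rewrite /= oe /= -muln2 mulnC add0n.
    by rewrite expnM -mulnn modXone.
  have h5 : 641 ^ e.+1 %% 5 = 1 by apply: modXone.
  move: hX h5; move: (641 ^ e.+1) => X; lia.
- exists ((641 ^ e.+1 + 1) %/ 642).
  have hY : 641 ^ e %% 642 = 1.
    have -> : e = 2 * e./2.
      by move: (odd_double_half e); rewrite oe /= -muln2 mulnC add0n.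
    by rewrite expnM -mulnn modXone.
  have h4 : 641 ^ e %% 4 = 1 by apply: modXone.
  have hb : 641 <= 641 ^ e.
    case: e e1 {oe hY h4} => [//|e _]; rewrite expnS.
    have : 0 < 641 ^ e by rewrite expn_gt0.
    move: (641 ^ e) => Z; lia.
  rewrite expnS; move: hY h4 hb; move: (641 ^ e) => Y hY h4 hb.
  have [o1 o2] : ((641 * Y + 1) %/ 642) %% 2 = 1 /\ 1 < (641 * Y + 1) %/ 642 by lia.
  split; [by [] | by move: o1; rewrite modn2; case: odd | exact: o2].
Qed.

Lemma case_ok k N (s : seq nat) : 1 <= k -> 2 ^ k = N -> sorted ltn s -> all prime s ->
  2 ^ N - 1 = 3 * \prod_(p <- s) p ->
  2 * (2 * \prod_(p <- s) p.-1) = 2 ^ N ->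
  super_imperfect (2 ^ (2 ^ k - 1)).
Proof.
move=> k1 hN ss ps e1 e2; split; first by rewrite expn_gt0.
have [ea oa] := (@pow2k k k1).
rewrite beta_pow2 // -ea hN e1 mulKn // beta_sqfree //.
move: e2; rewrite -hN; move: ea; set a := 2 ^ k - 1 => ->; rewrite expnS; lia.
Qed.

Lemma arithA (X : nat) : X %% 3 = 1 -> X %% 641 = 1 -> 641 < X ->
  [/\ (X - 1) %/ 3 * 3 = X - 1, 641 %| (X - 1) %/ 3 & 0 < (X - 1) %/ 3].
Proof. move=> *; split; lia. Qed.

Lemma fact641 : 2 ^ 64 %% 641 = 1.
Proof. lia. Qed.

Lemma big641 : 641 < 2 ^ 64.
Proof. lia. Qed.

Lemma half2 b Y : 2 * Y = 2 ^ b.+1 -> Y = 2 ^ b.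
Proof. by rewrite expnS => /eqP; rewrite eqn_pmul2l // => /eqP. Qed.

Theorem mainTheorem1 (k : nat) (hk : 1 <= k) :
  super_imperfect (2 ^ (2 ^ k - 1)) <-> k \in [:: 1; 2; 3; 4; 5].
Proof.
split; last first.
  rewrite !inE => /orP[/eqP->|/orP[/eqP->|/orP[/eqP->|/orP[/eqP->|/eqP->]]]].
  - apply: (@case_ok 1 2 [::]) => //; rewrite big_nil //.
  - apply: (@case_ok 2 4 [:: 2^2+1]); [by []|by []|by vm_compute|by vm_compute| |];
      rewrite !big_cons big_nil; lia.
  - apply: (@case_ok 3 8 [:: 2^2+1; 2^4+1]); [by []|by []|by vm_compute|by vm_compute| |];
      rewrite !big_cons big_nil; lia.
  - apply: (@case_ok 4 16 [:: 2^2+1; 2^4+1; 2^8+1]); [by []|by []|by vm_compute|by vm_compute| |];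
      rewrite !big_cons big_nil; lia.
  - apply: (@case_ok 5 32 [:: 2^2+1; 2^4+1; 2^8+1; 2^16+1]); [by []|by []|by vm_compute|by vm_compute| |];
      rewrite !big_cons big_nil; lia.
move=> [_ hs].
case Hk: (k \in [:: 1; 2; 3; 4; 5]) => //; exfalso.
have k6 : 6 <= k by move: Hk; rewrite !inE; lia.
have [ea oa] := (@pow2k k hk).
set a := 2 ^ k - 1 in ea oa hs.
rewrite beta_pow2 // -ea in hs.
have hK : 2 ^ k = 2 * 2 ^ (k - 1) by rewrite -expnS; congr (_ ^ _); lia.
have hK6 : 2 ^ k = 64 * 2 ^ (k - 6) by rewrite -(expnD 2 6); congr (_ ^ _); lia.
have h3 : 2 ^ (2 ^ k) %% 3 = 1 by rewrite hK expnM modXone.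
have h641 : 2 ^ (2 ^ k) %% 641 = 1.
  rewrite hK6 expnM; apply: modXone; [by [] | exact: fact641].
have hbig : 641 < 2 ^ (2 ^ k).
  apply: (leq_trans big641); apply: leq_pexp2l => //.
  rewrite -[64]/(2 ^ 6); exact: leq_pexp2l.
have [hm d641 m0] := @arithA _ h3 h641 hbig.
move: hm d641 m0 hs; set m := (2 ^ (2 ^ k) - 1) %/ 3 => hm d641 m0 hs.
have p641 : prime 641 by vm_compute.
have in641 : 641 \in primes m by rewrite mem_primes p641 m0 d641.
have e1 : 1 <= logn 641 m by rewrite logn_gt0.
have [d [dd od d1]] := @key _ e1.
have dB : d %| beta m.
  apply: (dvdn_trans dd); rewrite /beta (big_rem _ in641) /=.
  exact: dvdn_mulr.
have a1 : 1 <= a by move: oa; case: (a).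
have hb : beta m = 2 ^ a.-1.
  by apply: half2; rewrite prednK.
rewrite hb in dB.
have cop : coprime d (2 ^ a.-1) by apply: coprimeXr; rewrite coprimen2.
have : gcdn d (2 ^ a.-1) = d by apply/gcdn_idPl.
move: cop d1; rewrite /coprime => /eqP -> d1 hd; move: d1; rewrite -hd.
by [].
Qed.
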